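(* In the session calculus, strong weak fairness of instructions (SWI) coincides with strong fairness of components (SC): a path is SWI-fair iff it is SC-fair.
   Context: Session calculus: threads $P ::= \mathbf{end} \mid \bigoplus_{i\in I} p_i!\lambda_i;P_i \mid \sum_{i\in I} p_i?\lambda_i;P_i \mid X \mid \mu X.P$ (guarded recursion), thread states additionally $\langle q!\lambda\rangle;P$; networks $p[\![P]\!]\mid 0\mid N\parallel N$ with distinct locations and closed threads, modulo associativity/commutativity/unit. Transitions: (choice) $p[\![\bigoplus_{i\in I}p_i!\lambda_i;P_i]\!]\parallel N \xrightarrow{\tau} p[\![\langle p_k!\lambda_k\rangle;P_k]\!]\parallel N$; (unfold) $p[\![\mu X.P]\!]\parallel N\xrightarrow{\tau} p[\![P\{\mu X.P/X\}]\!]\parallel N$; (comm) $p_k[\![\langle q!\lambda_k\rangle;Q]\!]\parallel q[\![\sum_{i\in I}p_i?\lambda_i;P_i]\!]\parallel N \xrightarrow{(p_k,\lambda_k,q)} p_k[\![Q]\!]\parallel q[\![P_k]\!]\parallel N$. $\mathrm{comp}(t)$ is the moving location for a $\tau$-transition and $\{p,q\}$ for label $(p,\lambda,q)$. A path is a network state with a maximal sequence of transitions. Instructions: the occurrences of subexpressions $p_k!\lambda_k$, $p_k?\lambda_k$ or $\mu X$ in the network expression; each $\tau$-transition stems from one instruction and each communication transition from two; $\mathrm{instr}(t)$ is this set. Instruction $I$ is enabled in $N$ if some transition $t$ from $N$ has $I\in\mathrm{instr}(t)$; it is requested in $N$ if it is ready to be executed by its own thread in $N$ (even if not enabled for lack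 of a synchronisation partner); a path engages in $I$ if it contains $t$ with $I\in\mathrm{instr}(t)$. A path $\pi$ is SWI-fair if for every suffix $\pi'$, every instruction that is requested in every state of $\pi'$ and enabled in some state of every suffix of $\pi'$ is engaged in by $\pi'$. A path $\pi$ is SC-fair if for every suffix $\pi'$, every location $p$ such that every suffix of $\pi'$ contains a state with a transition $t$ satisfying $p\in\mathrm{comp}(t)$ has a transition involving $p$ in $\pi'$. *)

(* Defs.v *)
From Stdlib Require Import List Arith Bool.
Open Scope bool_scope.
Import ListNotations.

Definition loc := nat.
Definition lab := nat.
Definition var := nat.

Inductive proc : Type :=
| PEnd
| POut (bs : list (loc * lab * proc))   (* (+)_{i in I} p_i!l_i;P_i *)
| PIn  (bs : list (loc * lab * proc))   (* Sum_{i in I} p_i?l_i;P_i *)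
| PVar (X : var)
| PMu  (X : var) (P : proc).

(* thread states: a process, or <q!l>;P *)
Inductive tstate : Type :=
| TProc (P : proc)
| TPend (q : loc) (l : lab) (P : proc).

(* networks modulo assoc./comm./unit with distinct locations:
   a partial map from locations to thread states *)
Definition network := loc -> option tstate.

Fixpoint occurs_free (X : var) (P : proc) : bool :=
  match P with
  | PEnd => false
  | POut bs | PIn bs =>
      (fix go (bs : list (loc * lab * proc)) : bool :=
         match bs with [] => false | (_, _, Q) :: bs' => occurs_free X Q || go bs' end) bs
  | PVar Y => Nat.eqb X Y
  | PMu Y Q => negb (Nat.eqb X Y) && occurs_free X Q
  end.

Fixpoint unguarded (X : var) (P : proc) : bool :=
  match P with
  | PVar Y => Nat.eqb X Y
  | PMu Y Q => negb (Nat.eqb X Y) && unguarded X Q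
  | _ => false
  end.

Fixpoint guarded (P : proc) : bool :=
  match P with
  | PEnd | PVar _ => true
  | POut bs | PIn bs =>
      (fix go (bs : list (loc * lab * proc)) : bool :=
         match bs with [] => true | (_, _, Q) :: bs' => guarded Q && go bs' end) bs
  | PMu X Q => negb (unguarded X Q) && guarded Q
  end.

Definition closed (P : proc) : Prop := forall X, occurs_free X P = false.

Definition wf_tstate (T : tstate) : Prop :=
  match T with
  | TProc P | TPend _ _ P => closed P /\ guarded P = true
  end.

Definition wf_network (N : network) : Prop :=
  (exists L : list loc, forall p, N p <> None -> In p L) /\
  (forall p T, N p = Some T -> wf_tstate T).

(** * Instructions: occurrences of p!l, p?l, mu X in the network expression.
    An occurrence is identified by its location and its address in the
    syntax tree of the thread at that location. *)
Inductive dir : Type := Dbranch (k : nat) | Dcont (k : nat) | Dbody.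
Definition instr : Type := (loc * list dir)%type.

Inductive aproc : Type :=
| AEnd
| AOut (bs : list (instr * loc * lab * aproc))
| AIn  (bs : list (instr * loc * lab * aproc))
| AVar (X : var)
| AMu  (i : instr) (X : var) (P : aproc).

Inductive atstate : Type :=
| AProc (P : aproc)
| APend (i : instr) (q : loc) (l : lab) (P : aproc).

Definition anet := loc -> option atstate.

Fixpoint ann (p : loc) (a : list dir) (P : proc) : aproc :=
  match P with
  | PEnd => AEnd
  | POut bs => AOut
      ((fix go (k : nat) (bs : list (loc * lab * proc)) :=
          match bs with
          | [] => []
          | (q, l, Q) :: bs' => ((p, Dbranch k :: a), q, l, ann p (Dcont k :: a) Q) :: go (S k) bs'
          end) 0 bs)
  | PIn bs => AIn
      ((fix go (k : nat) (bs : list (loc * lab * proc)) :=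
          match bs with
          | [] => []
          | (q, l, Q) :: bs' => ((p, Dbranch k :: a), q, l, ann p (Dcont k :: a) Q) :: go (S k) bs'
          end) 0 bs)
  | PVar X => AVar X
  | PMu X Q => AMu (p, a) X (ann p (Dbody :: a) Q)
  end.

Definition annotate_ts (p : loc) (T : tstate) : atstate :=
  match T with
  | TProc P => AProc (ann p [] P)
  | TPend q l P => APend (p, [Dbranch 0]) q l (ann p [Dcont 0] P)
  end.

Definition annotate (N : network) : anet :=
  fun p => option_map (annotate_ts p) (N p).

(* substitution P{Q/X} (Q closed); copies keep their instruction identities *)
Fixpoint asubst (X : var) (Q : aproc) (P : aproc) : aproc :=
  match P with
  | AEnd => AEnd
  | AOut bs => AOut
      ((fix go (bs : list (instr * loc * lab * aproc)) :=
          match bs with [] => [] | (i, q, l, R) :: bs' => (i, q, l, asubst X Q R) :: go bs' end) bs)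
  | AIn bs => AIn
      ((fix go (bs : list (instr * loc * lab * aproc)) :=
          match bs with [] => [] | (i, q, l, R) :: bs' => (i, q, l, asubst X Q R) :: go bs' end) bs)
  | AVar Y => if Nat.eqb X Y then Q else AVar Y
  | AMu i Y R => if Nat.eqb X Y then AMu i Y R else AMu i Y (asubst X Q R)
  end.

Inductive label : Type :=
| LTau (p : loc)
| LComm (p : loc) (l : lab) (q : loc).

(* a transition: its label and instr(t), the instructions it stems from *)
Record trans : Type := mkTrans { tlab : label; tinstr : list instr }.

Definition comp (t : trans) : list loc :=
  match tlab t with LTau p => [p] | LComm p _ q => [p; q] end.

Definition upd (N : anet) (p : loc) (T : atstate) : anet :=
  fun r => if Nat.eqb r p then Some T else N r.

Inductive step : anet -> trans -> anet -> Prop :=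
| st_choice N p bs k i q l P :
    N p = Some (AProc (AOut bs)) ->
    nth_error bs k = Some (i, q, l, P) ->
    step N (mkTrans (LTau p) [i]) (upd N p (APend i q l P))
| st_unfold N p i X P :
    N p = Some (AProc (AMu i X P)) ->
    step N (mkTrans (LTau p) [i]) (upd N p (AProc (asubst X (AMu i X P) P)))
| st_comm N p i q l Q cs k j P :
    N p = Some (APend i q l Q) ->
    N q = Some (AProc (AIn cs)) ->
    nth_error cs k = Some (j, p, l, P) ->
    step N (mkTrans (LComm p l q) [i; j]) (upd (upd N p (AProc Q)) q (AProc P)).

(* instructions ready to be executed by their own thread *)
Definition front (T : atstate) : list instr :=
  match T with
  | AProc (AOut bs) | AProc (AIn bs) => map (fun b => fst (fst (fst b))) bs
  | AProc (AMu i _ _) => [i]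
  | APend i _ _ _ => [i]
  | _ => []
  end.

Definition requested (N : anet) (I : instr) : Prop :=
  exists p T, N p = Some T /\ In I (front T).

Definition enabled (N : anet) (I : instr) : Prop :=
  exists t N', step N t N' /\ In I (tinstr t).

(** * Paths: states pst 0, pst 1, ..., transitions ptr n from pst n to pst (n+1);
    plen = Some m: finite path with m transitions; None: infinite. *)
Record path : Type := mkPath { pst : nat -> anet; ptr : nat -> trans; plen : option nat }.

Definition st_idx (pi : path) (n : nat) : Prop :=
  match plen pi with None => True | Some m => n <= m end.
Definition tr_idx (pi : path) (n : nat) : Prop :=
  match plen pi with None => True | Some m => n < m end.

Definition is_path (pi : path) : Prop :=
  (forall n, tr_idx pi n -> step (pst pi n) (ptr pi n) (pst pi (S n))) /\
  (forall m, plen pi = Some m -> forall t N', ~ step (pst pi m) t N').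

(* suffixes of pi are those starting at state index k with st_idx pi k *)
Definition SWI_fair (pi : path) : Prop :=
  forall k, st_idx pi k ->
  forall I : instr,
    (forall n, k <= n -> st_idx pi n -> requested (pst pi n) I) ->
    (forall k', k <= k' -> st_idx pi k' ->
       exists n, k' <= n /\ st_idx pi n /\ enabled (pst pi n) I) ->
    exists n, k <= n /\ tr_idx pi n /\ In I (tinstr (ptr pi n)).

Definition SC_fair (pi : path) : Prop :=
  forall k, st_idx pi k ->
  forall p : loc,
    (forall k', k <= k' -> st_idx pi k' ->
       exists n t N', k' <= n /\ st_idx pi n /\ step (pst pi n) t N' /\ In p (comp t)) ->
    exists n, k <= n /\ tr_idx pi n /\ In p (comp (ptr pi n)).

(* Main.v *)
Require Import Defs.
From Stdlib Require Import List Arith Bool Lia Classical.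
Import ListNotations.

Fixpoint afree (X : var) (P : aproc) : bool :=
  match P with
  | AEnd => false
  | AOut bs | AIn bs => (fix go (bs : list (instr * loc * lab * aproc)) :=
      match bs with [] => false | (_,_,_,Q) :: bs' => afree X Q || go bs' end) bs
  | AVar Y => Nat.eqb X Y
  | AMu _ Y Q => negb (Nat.eqb X Y) && afree X Q
  end.

Definition aclosed (P : aproc) := forall Y, afree Y P = false.

Definition aproc_ind' (Pr : aproc -> Prop)
  (H1 : Pr AEnd)
  (H2 : forall bs, Forall (fun b => Pr (snd b)) bs -> Pr (AOut bs))
  (H3 : forall bs, Forall (fun b => Pr (snd b)) bs -> Pr (AIn bs))
  (H4 : forall X, Pr (AVar X))
  (H5 : forall i X P, Pr P -> Pr (AMu i X P)) : forall P, Pr P :=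
 fix F P := match P with
 | AEnd => H1
 | AOut bs => H2 bs ((fix G bs : Forall (fun b => Pr (snd b)) bs :=
      match bs with [] => Forall_nil _ | b :: bs' => Forall_cons b (F (snd b)) (G bs') end) bs)
 | AIn bs => H3 bs ((fix G bs : Forall (fun b => Pr (snd b)) bs :=
      match bs with [] => Forall_nil _ | b :: bs' => Forall_cons b (F (snd b)) (G bs') end) bs)
 | AVar X => H4 X
 | AMu i X P => H5 i X P (F P)
 end.

Definition proc_ind' (Pr : proc -> Prop)
  (H1 : Pr PEnd)
  (H2 : forall bs, Forall (fun b => Pr (snd b)) bs -> Pr (POut bs))
  (H3 : forall bs, Forall (fun b => Pr (snd b)) bs -> Pr (PIn bs))
  (H4 : forall X, Pr (PVar X))
  (H5 : forall X P, Pr P -> Pr (PMu X P)) : forall P, Pr P :=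
 fix F P := match P with
 | PEnd => H1
 | POut bs => H2 bs ((fix G bs : Forall (fun b => Pr (snd b)) bs :=
      match bs with [] => Forall_nil _ | b :: bs' => Forall_cons b (F (snd b)) (G bs') end) bs)
 | PIn bs => H3 bs ((fix G bs : Forall (fun b => Pr (snd b)) bs :=
      match bs with [] => Forall_nil _ | b :: bs' => Forall_cons b (F (snd b)) (G bs') end) bs)
 | PVar X => H4 X
 | PMu X P => H5 X P (F P)
 end.

Lemma afree_out X bs : afree X (AOut bs) = existsb (fun b => afree X (snd b)) bs.
Proof. simpl. induction bs as [|[[[i q] l] R] bs IH]; simpl; [reflexivity| rewrite IH; reflexivity]. Qed.
Lemma afree_in X bs : afree X (AIn bs) = existsb (fun b => afree X (snd b)) bs.
Proof. simpl. induction bs as [|[[[i q] l] R] bs IH]; simpl; [reflexivity| rewrite IH; reflexivity]. Qed.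

Definition sf X Q (b : instr * loc * lab * aproc) :=
  match b with (i,q,l,R) => (i,q,l,asubst X Q R) end.

Lemma asubst_out X Q bs : asubst X Q (AOut bs) = AOut (map (sf X Q) bs).
Proof. simpl. f_equal. induction bs as [|[[[i q] l] R] bs IH]; simpl; [reflexivity| rewrite IH; reflexivity]. Qed.
Lemma asubst_in X Q bs : asubst X Q (AIn bs) = AIn (map (sf X Q) bs).
Proof. simpl. f_equal. induction bs as [|[[[i q] l] R] bs IH]; simpl; [reflexivity| rewrite IH; reflexivity]. Qed.

Lemma of_out X bs : occurs_free X (POut bs) = existsb (fun b => occurs_free X (snd b)) bs.
Proof. simpl. induction bs as [|[[q l] R] bs IH]; simpl; [reflexivity| rewrite IH; reflexivity]. Qed.
Lemma of_in X bs : occurs_free X (PIn bs) = existsb (fun b => occurs_free X (snd b)) bs.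
Proof. simpl. induction bs as [|[[q l] R] bs IH]; simpl; [reflexivity| rewrite IH; reflexivity]. Qed.

Fixpoint annL (p : loc) (a : list dir) (k : nat) (bs : list (loc * lab * proc)) :=
  match bs with
  | [] => []
  | (q, l, Q) :: bs' => ((p, Dbranch k :: a), q, l, ann p (Dcont k :: a) Q) :: annL p a (S k) bs'
  end.

Lemma ann_out p a bs : ann p a (POut bs) = AOut (annL p a 0 bs).
Proof. simpl. f_equal. generalize 0. induction bs as [|[[q l] Q] bs IH]; intros k; simpl; [reflexivity| f_equal; apply IH]. Qed.
Lemma ann_in p a bs : ann p a (PIn bs) = AIn (annL p a 0 bs).
Proof. simpl. f_equal. generalize 0. induction bs as [|[[q l] Q] bs IH]; intros k; simpl; [reflexivity| f_equal; apply IH]. Qed.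
Lemma existsb_false_In {A} (f : A -> bool) l x : existsb f l = false -> In x l -> f x = false.
Proof. intros H Hx. destruct (f x) eqn:E; auto. rewrite <- H. symmetry. apply existsb_exists. eauto. Qed.

Lemma map_id_in {A} (f : A -> A) l : (forall x, In x l -> f x = x) -> map f l = l.
Proof. induction l; simpl; intros H; auto. rewrite H, IHl; auto. Qed.

Lemma asubst_nofree X Q P : afree X P = false -> asubst X Q P = P.
Proof.
  induction P as [| bs IH | bs IH | Z | i Z R IH] using aproc_ind'; intros H.
  - reflexivity.
  - rewrite asubst_out. f_equal. apply map_id_in. intros [[[i q] l] R] Hin.
    rewrite afree_out in H. rewrite Forall_forall in IH. simpl.
    specialize (IH _ Hin (existsb_false_In _ _ _ H Hin)). simpl in IH. rewrite IH; auto.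
  - rewrite asubst_in. f_equal. apply map_id_in. intros [[[i q] l] R] Hin.
    rewrite afree_in in H. rewrite Forall_forall in IH. simpl.
    specialize (IH _ Hin (existsb_false_In _ _ _ H Hin)). simpl in IH. rewrite IH; auto.
  - simpl in *. rewrite H. reflexivity.
  - simpl in *. destruct (Nat.eqb X Z); auto. simpl in H. rewrite IH; auto.
Qed.

Lemma afree_subst X Q P Y : aclosed Q -> afree Y (asubst X Q P) = true -> afree Y P = true /\ Y <> X.
Proof.
  intros HQ. induction P as [| bs IH | bs IH | Z | i Z R IH] using aproc_ind'; intros H.
  - discriminate.
  - rewrite asubst_out, afree_out in H. apply existsb_exists in H as [b [Hb Hf]].
    apply in_map_iff in Hb as [[[[i q] l] R] [Eb Hin]]. subst b. simpl in Hf.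
    rewrite Forall_forall in IH. destruct (IH _ Hin Hf) as [H1 H2]. split; auto.
    rewrite afree_out. apply existsb_exists. exists (i,q,l,R). auto.
  - rewrite asubst_in, afree_in in H. apply existsb_exists in H as [b [Hb Hf]].
    apply in_map_iff in Hb as [[[[i q] l] R] [Eb Hin]]. subst b. simpl in Hf.
    rewrite Forall_forall in IH. destruct (IH _ Hin Hf) as [H1 H2]. split; auto.
    rewrite afree_in. apply existsb_exists. exists (i,q,l,R). auto.
  - simpl in H. destruct (Nat.eqb_spec X Z).
    + rewrite HQ in H. discriminate.
    + simpl in H. apply Nat.eqb_eq in H. subst. simpl. rewrite Nat.eqb_refl. auto.
  - simpl in H. destruct (Nat.eqb_spec X Z).
    + subst. simpl in H. apply andb_true_iff in H as [H1 H2]. simpl. rewrite H1, H2.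
      split; auto. intro; subst. rewrite Nat.eqb_refl in H1. discriminate.
    + simpl in H. apply andb_true_iff in H as [H1 H2]. destruct (IH H2). simpl.
      rewrite H1, H. auto.
Qed.

Lemma afree_ann p X P : forall a, afree X (ann p a P) = occurs_free X P.
Proof.
  induction P as [| bs IH | bs IH | Z | Z R IH] using proc_ind'; intros a.
  - reflexivity.
  - rewrite ann_out, afree_out, of_out. generalize 0. induction bs as [|[[q l] Q] bs IHb]; intros k; simpl; auto.
    inversion IH; subst. simpl in *. rewrite H1, IHb; auto.
  - rewrite ann_in, afree_in, of_in. generalize 0. induction bs as [|[[q l] Q] bs IHb]; intros k; simpl; auto.
    inversion IH; subst. simpl in *. rewrite H1, IHb; auto.
  - reflexivity.
  - simpl. rewrite IH. reflexivity.
Qed.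

Inductive WA (p : loc) : list dir -> aproc -> Prop :=
| WA_end c : WA p c AEnd
| WA_var c X : WA p c (AVar X)
| WA_out c bs :
    (forall k i q l R, nth_error bs k = Some (i,q,l,R) -> i = (p, Dbranch k :: c)) ->
    (forall k i q l R, nth_error bs k = Some (i,q,l,R) -> WA p (Dcont k :: c) R) ->
    WA p c (AOut bs)
| WA_in c bs :
    (forall k i q l R, nth_error bs k = Some (i,q,l,R) -> i = (p, Dbranch k :: c)) ->
    (forall k i q l R, nth_error bs k = Some (i,q,l,R) -> WA p (Dcont k :: c) R) ->
    WA p c (AIn bs)
| WA_mu1 c X R : WA p (Dbody :: c) R -> WA p c (AMu (p,c) X R)
| WA_mu2 c a0 X R : length a0 < length c -> aclosed (AMu (p,a0) X R) ->
    WA p (Dbody :: a0) R -> WA p c (AMu (p,a0) X R).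

Lemma annL_nth p a bs : forall k n i q l R, nth_error (annL p a k bs) n = Some (i,q,l,R) ->
  i = (p, Dbranch (k+n) :: a) /\ exists Q, R = ann p (Dcont (k+n) :: a) Q /\ In (q,l,Q) bs.
Proof.
  induction bs as [|[[q0 l0] Q0] bs IH]; intros k n i q l R H; simpl in H.
  - destruct n; discriminate.
  - destruct n as [|n]; simpl in H.
    + inversion H; subst. rewrite Nat.add_0_r. split; auto. exists Q0. simpl; auto.
    + destruct (IH _ _ _ _ _ _ H) as [H1 [Q [H2 H3]]]. replace (k + S n) with (S k + n) by lia.
      split; auto. exists Q. simpl; auto.
Qed.

Lemma WA_ann p P : forall a, WA p a (ann p a P).
Proof.
  induction P as [| bs IH | bs IH | Z | Z R IH] using proc_ind'; intros a.
  - constructor.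
  - rewrite ann_out. rewrite Forall_forall in IH. constructor; intros k i q l R H;
    destruct (annL_nth _ _ _ _ _ _ _ _ _ H) as [H1 [Q [H2 H3]]]; auto. subst. apply (IH _ H3).
  - rewrite ann_in. rewrite Forall_forall in IH. constructor; intros k i q l R H;
    destruct (annL_nth _ _ _ _ _ _ _ _ _ H) as [H1 [Q [H2 H3]]]; auto. subst. apply (IH _ H3).
  - constructor.
  - simpl. constructor. apply IH.
Qed.

Lemma nth_map_sf X Q bs k i q l R : nth_error (map (sf X Q) bs) k = Some (i,q,l,R) ->
  exists R0, nth_error bs k = Some (i,q,l,R0) /\ R = asubst X Q R0.
Proof.
  rewrite nth_error_map. destruct (nth_error bs k) as [[[[i0 q0] l0] R0]|]; simpl; intro H; inversion H; subst; eauto.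
Qed.

Lemma WA_subst p X Q c R : WA p c R ->
  (forall c', length c <= length c' -> WA p c' Q) -> aclosed Q -> WA p c (asubst X Q R).
Proof.
  intros H. induction H; intros HQ HC.
  - constructor.
  - simpl. destruct (Nat.eqb X X0); [apply HQ; lia| constructor].
  - rewrite asubst_out. constructor; intros k i q l R' Hn; destruct (nth_map_sf _ _ _ _ _ _ _ _ Hn) as [R0 [E1 E2]]; eauto.
    subst. eapply H1; eauto. intros; apply HQ; simpl in *; lia.
  - rewrite asubst_in. constructor; intros k i q l R' Hn; destruct (nth_map_sf _ _ _ _ _ _ _ _ Hn) as [R0 [E1 E2]]; eauto.
    subst. eapply H1; eauto. intros; apply HQ; simpl in *; lia.
  - simpl. destruct (Nat.eqb X X0); constructor; auto. apply IHWA; auto. intros; apply HQ; simpl in *; lia.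
  - rewrite asubst_nofree; [constructor; auto| apply H0].
Qed.
Lemma WA_out_inv r c bs : WA r c (AOut bs) ->
  (forall k i q l R, nth_error bs k = Some (i,q,l,R) -> i = (r, Dbranch k :: c)) /\
  (forall k i q l R, nth_error bs k = Some (i,q,l,R) -> WA r (Dcont k :: c) R).
Proof. intros H; inversion H; subst; auto. Qed.
Lemma WA_in_inv r c bs : WA r c (AIn bs) ->
  (forall k i q l R, nth_error bs k = Some (i,q,l,R) -> i = (r, Dbranch k :: c)) /\
  (forall k i q l R, nth_error bs k = Some (i,q,l,R) -> WA r (Dcont k :: c) R).
Proof. intros H; inversion H; subst; auto. Qed.
Definition tsWA (r : loc) (T : atstate) : Prop :=
  match T with
  | AProc P => aclosed P /\ exists c, WA r c P
  | APend i q l P => fst i = r /\ aclosed P /\ exists c, WA r c P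
  end.

Definition INV (N : anet) : Prop := forall r T, N r = Some T -> tsWA r T.

Lemma INV_init N0 : wf_network N0 -> INV (annotate N0).
Proof.
  intros [_ Hwf] r T H. unfold annotate in H. destruct (N0 r) as [T0|] eqn:E; [|discriminate].
  simpl in H. inversion H; subst. apply Hwf in E. destruct T0 as [P|q l P]; simpl in *;
  destruct E as [Hc _]; repeat split; try (intro Y; rewrite afree_ann; apply Hc); eexists; apply WA_ann.
Qed.

Lemma aclosed_nth bs k i q l R : nth_error bs k = Some (i,q,l,R) ->
  (aclosed (AOut bs) \/ aclosed (AIn bs)) -> aclosed R.
Proof.
  intros H Hc Y. destruct (afree Y R) eqn:E; auto. exfalso.
  assert (Hin : In (i,q,l,R) bs) by (eapply nth_error_In; eauto).
  assert (Hx : existsb (fun b => afree Y (snd b)) bs = true) by (apply existsb_exists; exists (i,q,l,R); auto).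
  destruct Hc as [Hc|Hc]; specialize (Hc Y); [rewrite afree_out in Hc| rewrite afree_in in Hc]; congruence.
Qed.

Lemma INV_step N t N' : INV N -> step N t N' -> INV N'.
Proof.
  intros HI Hs. destruct Hs; intros r T HT; unfold upd in HT.
  - destruct (Nat.eqb_spec r p).
    + inversion HT; subst. specialize (HI _ _ H). simpl in HI. destruct HI as [Hc [c Hw]].
      destruct (WA_out_inv _ _ _ Hw) as [Hid Hcont]. simpl. rewrite (Hid _ _ _ _ _ H0). repeat split; eauto.
      eapply aclosed_nth; eauto.
    + eauto.
  - destruct (Nat.eqb_spec r p).
    + inversion HT; subst. specialize (HI _ _ H). simpl in HI. destruct HI as [Hc [c Hw]].
      simpl. assert (Ha : exists a0, i = (p, a0) /\ WA p (Dbody :: a0) P).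
      { inversion Hw; subst; eauto. }
      destruct Ha as [a0 [-> Hw']]. split.
      * intros Y. destruct (afree Y (asubst X (AMu (p,a0) X P) P)) eqn:E; auto.
        destruct (afree_subst _ _ _ _ Hc E) as [E1 E2]. specialize (Hc Y). simpl in Hc.
        rewrite E1 in Hc. destruct (Nat.eqb_spec Y X); [contradiction|discriminate].
      * exists (Dbody :: a0). apply WA_subst; auto. intros c' Hl. simpl in Hl.
        apply WA_mu2; auto; lia.
    + eauto.
  - destruct (Nat.eqb_spec r q).
    + inversion HT; subst. specialize (HI _ _ H0). simpl in HI. destruct HI as [Hc [c Hw]].
      destruct (WA_in_inv _ _ _ Hw) as [Hid Hcont]. simpl. split; [eapply aclosed_nth; eauto| eauto].
    + destruct (Nat.eqb_spec r p).
      * inversion HT; subst. specialize (HI _ _ H). simpl in HI. simpl. tauto.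
      * eauto.
Qed.

Lemma front_loc N r T I : INV N -> N r = Some T -> In I (front T) -> fst I = r.
Proof.
  intros HI HN Hf. specialize (HI _ _ HN). destruct T as [P|i q l P]; simpl in *.
  - destruct HI as [_ [c Hw]]. destruct P; simpl in Hf; try contradiction.
    + apply in_map_iff in Hf as [[[[i q] l] R] [E Hin]]. simpl in E. subst.
      apply In_nth_error in Hin as [k Hk]. destruct (WA_out_inv _ _ _ Hw) as [Hid _]. rewrite (Hid _ _ _ _ _ Hk). reflexivity.
    + apply in_map_iff in Hf as [[[[i q] l] R] [E Hin]]. simpl in E. subst.
      apply In_nth_error in Hin as [k Hk]. destruct (WA_in_inv _ _ _ Hw) as [Hid _]. rewrite (Hid _ _ _ _ _ Hk). reflexivity.
    + destruct Hf as [<-|[]]. inversion Hw; subst; reflexivity.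
  - destruct Hf as [<-|[]]. tauto.
Qed.

Lemma step_comp_front N t N' p : step N t N' -> In p (comp t) ->
  exists T, N p = Some T /\ exists I, In I (front T) /\ In I (tinstr t).
Proof.
  intros Hs Hp. destruct Hs; simpl in Hp.
  - destruct Hp as [<-|[]]. eexists; split; eauto. exists i. split; [|left; auto].
    simpl. apply in_map_iff. exists (i,q,l,P). split; auto. eapply nth_error_In; eauto.
  - destruct Hp as [<-|[]]. eexists; split; eauto. exists i. simpl; auto.
  - destruct Hp as [<-|[<-|[]]].
    + eexists; split; eauto. exists i. simpl; auto.
    + eexists; split; eauto. exists j. split; [|simpl; auto].
      simpl. apply in_map_iff. eexists (j,_,l,P). split; [reflexivity|]. eapply nth_error_In; eauto.
Qed.

Lemma tinstr_comp N t N' I : INV N -> step N t N' -> In I (tinstr t) -> In (fst I) (comp t).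
Proof.
  intros HI Hs HIn. destruct Hs; simpl in HIn.
  - destruct HIn as [<-|[]]. simpl. left. symmetry. eapply front_loc; eauto.
    simpl. apply in_map_iff. exists (i,q,l,P). split; auto. eapply nth_error_In; eauto.
  - destruct HIn as [<-|[]]. simpl. left. symmetry. eapply front_loc; eauto. simpl; auto.
  - simpl. destruct HIn as [<-|[<-|[]]].
    + left. symmetry. eapply front_loc; eauto. simpl; auto.
    + right; left. symmetry. eapply front_loc; eauto.
      simpl. apply in_map_iff. eexists (j,_,l,P). split; [reflexivity|]. eapply nth_error_In; eauto.
Qed.

Lemma step_other N t N' p : step N t N' -> ~ In p (comp t) -> N' p = N p.
Proof.
  intros Hs Hp. destruct Hs; simpl in Hp; unfold upd.
  - destruct (Nat.eqb_spec p p0); [subst; tauto| auto].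
  - destruct (Nat.eqb_spec p p0); [subst; tauto| auto].
  - destruct (Nat.eqb_spec p q); [subst; tauto|]. destruct (Nat.eqb_spec p p0); [subst; tauto| auto].
Qed.

Lemma WA_front r c P I : WA r c P -> In I (front (AProc P)) ->
  (exists k, I = (r, Dbranch k :: c)) \/ I = (r, c) \/ exists a0, I = (r, a0) /\ length a0 < length c.
Proof.
  intros Hw Hf. destruct Hw; simpl in Hf; try contradiction.
  - apply in_map_iff in Hf as [[[[i q] l] R] [E Hin]]. simpl in E. subst.
    apply In_nth_error in Hin as [k Hk]. left. exists k. eauto.
  - apply in_map_iff in Hf as [[[[i q] l] R] [E Hin]]. simpl in E. subst.
    apply In_nth_error in Hin as [k Hk]. left. exists k. eauto.
  - destruct Hf as [<-|[]]. auto.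
  - destruct Hf as [<-|[]]. eauto.
Qed.

Lemma key N t N' I : INV N -> step N t N' -> In (fst I) (comp t) ->
  requested N I -> requested N' I -> In I (tinstr t).
Proof.
  intros HI Hs Hc [r [T [HT Hf]]] [r' [T' [HT' Hf']]].
  pose proof (front_loc _ _ _ _ HI HT Hf) as E1.
  pose proof (front_loc _ _ _ _ (INV_step _ _ _ HI Hs) HT' Hf') as E2.
  destruct Hs; simpl in Hc |- *.
  - destruct Hc as [Hc|[]]. subst. unfold upd in HT'. rewrite Nat.eqb_refl in HT'.
    inversion HT'; subst. simpl in Hf'. tauto.
  - destruct Hc as [Hc|[]]. subst. rewrite H in HT. inversion HT; subst. simpl in Hf. tauto.
  - destruct (Nat.eqb_spec r p).
    + subst. rewrite H in HT. inversion HT; subst. simpl in Hf. destruct Hf as [<-|[]]. auto.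
    + destruct Hc as [Hc|[Hc|[]]]; [congruence|]. subst r. rewrite <- Hc, H0 in HT. inversion HT; subst.
      unfold upd in HT'. rewrite Nat.eqb_refl in HT'. inversion HT'; subst.
      specialize (HI _ _ H0). simpl in HI. destruct HI as [_ [c Hw]]. destruct (WA_in_inv _ _ _ Hw) as [H3 H4].
      simpl in Hf. apply in_map_iff in Hf as [[[[i0 q0] l0] R0] [E Hin]]. simpl in E. subst.
      apply In_nth_error in Hin as [k0 Hk0]. rewrite (H3 _ _ _ _ _ Hk0) in Hf'.
      destruct (WA_front _ _ _ _ (H4 _ _ _ _ _ H1) Hf') as [[k' E]|[E|[a0 [E Hl]]]];
        injection E; intros; subst;
        try discriminate;
        try (match goal with Hx : c = Dcont k :: c |- _ => apply (f_equal (@length _)) in Hx; simpl in Hx; lia end);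
        try (match goal with Hx : _ = Dbranch _ :: c |- _ => rewrite <- Hx in Hl end; simpl in Hl; lia);
        try (simpl in Hl; lia).
Qed.
Lemma st_of_tr pi n : tr_idx pi n -> st_idx pi n /\ st_idx pi (S n).
Proof. unfold tr_idx, st_idx. destruct (plen pi); lia. Qed.

Lemma INV_path N0 pi : wf_network N0 -> is_path pi -> pst pi 0 = annotate N0 ->
  forall n, st_idx pi n -> INV (pst pi n).
Proof.
  intros Hwf [Hp _] H0 n. induction n; intros Hs.
  - rewrite H0. apply INV_init; auto.
  - assert (Ht : tr_idx pi n) by (unfold tr_idx, st_idx in *; destruct (plen pi); lia).
    apply (INV_step (pst pi n) (ptr pi n)); auto. apply IHn. apply st_of_tr; auto.
Qed.

Lemma pigeon (L : list instr) (P : nat -> instr -> Prop) :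
  (forall k', exists n, k' <= n /\ exists I, In I L /\ P n I) ->
  exists I, In I L /\ forall k', exists n, k' <= n /\ P n I.
Proof.
  induction L as [|x L IH]; intros H.
  - destruct (H 0) as [n [_ [I [[] _]]]].
  - destruct (classic (forall k', exists n, k' <= n /\ P n x)) as [Hx|Hx].
    + exists x. simpl; auto.
    + apply not_all_ex_not in Hx as [K HK].
      destruct IH as [I [HI HP]].
      * intros k'. destruct (H (max k' K)) as [n [Hn [I [HI HPI]]]].
        destruct HI as [<-|HI].
        -- exfalso. apply HK. exists n. split; auto. lia.
        -- exists n. split; [lia|]. eauto.
      * exists I. simpl; auto.
Qed.

Theorem mainTheorem18 :
  forall (N0 : network), wf_network N0 ->
  forall pi : path, is_path pi -> pst pi 0 = annotate N0 ->
  (SWI_fair pi <-> SC_fair pi).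
Proof.
  intros N0 Hwf pi Hpath H0.
  pose proof (INV_path _ _ Hwf Hpath H0) as HINV.
  destruct Hpath as [Hstep Hmax].
  split.
  -
    intros HSWI k Hk p Hprem.
    destruct (plen pi) as [m|] eqn:Hlen.
    + exfalso. assert (Hkm : k <= m) by (unfold st_idx in Hk; rewrite Hlen in Hk; auto).
      destruct (Hprem m Hkm) as [n [t [N' [Hn1 [Hn2 [Hs _]]]]]].
      { unfold st_idx; rewrite Hlen; auto. }
      unfold st_idx in Hn2; rewrite Hlen in Hn2. assert (n = m) by lia. subst.
      exact (Hmax m eq_refl _ _ Hs).
    + assert (Hst : forall n, st_idx pi n) by (intros; unfold st_idx; rewrite Hlen; auto).
      assert (Htr : forall n, tr_idx pi n) by (intros; unfold tr_idx; rewrite Hlen; auto).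
      apply NNPP. intros Hnot.
      assert (Hconst : forall d, pst pi (k + d) p = pst pi k p).
      { induction d. - rewrite Nat.add_0_r; auto.
        - rewrite <- IHd. replace (k + S d) with (S (k + d)) by lia.
          apply (step_other _ (ptr pi (k+d))); auto.
          intros Hin. apply Hnot. exists (k+d). repeat split; auto; lia. }
      assert (Hconst' : forall n, k <= n -> pst pi n p = pst pi k p).
      { intros n Hn. replace n with (k + (n - k)) by lia. auto. }
      destruct (Hprem k (le_n k) Hk) as [n0 [t0 [N0' [Hn0 [_ [Hs0 Hp0]]]]]].
      destruct (step_comp_front _ _ _ _ Hs0 Hp0) as [T0 [HT0 _]].
      rewrite Hconst' in HT0; auto.
      destruct (pigeon (front T0) (fun n I => k <= n /\ enabled (pst pi n) I)) as [I [HI HP]].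
      { intros k'. destruct (Hprem (max k k') ltac:(lia) (Hst _)) as [n [t [N' [Hn [_ [Hs Hp]]]]]].
        destruct (step_comp_front _ _ _ _ Hs Hp) as [T [HT [I [HI1 HI2]]]].
        rewrite Hconst' in HT by lia. rewrite HT0 in HT. inversion HT; subst.
        exists n. split; [lia|]. exists I. split; auto. split; [lia|]. exists t, N'. auto. }
      destruct (HSWI k Hk I) as [n [Hn [_ HIn]]].
      * intros n Hn _. exists p, T0. rewrite Hconst'; auto.
      * intros k' Hk' _. destruct (HP k') as [n [Hn [Hkn Hen]]]. exists n. auto.
      * apply Hnot. exists n. repeat split; auto.
        pose proof (tinstr_comp _ _ _ _ (HINV n (Hst n)) (Hstep n (Htr n)) HIn) as Hc.
        rewrite (front_loc _ _ _ _ (HINV k Hk) HT0 HI) in Hc. auto.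
  -
    intros HSC k Hk I Hreq Hen.
    destruct (HSC k Hk (fst I)) as [n [Hn [Htn Hc]]].
    + intros k' Hk' Hsk'. destruct (Hen k' Hk' Hsk') as [n [Hn [Hsn [t [N' [Hs HIn]]]]]].
      exists n, t, N'. repeat split; auto. eapply tinstr_comp; eauto.
    + exists n. repeat split; auto. destruct (st_of_tr _ _ Htn) as [S1 S2].
      apply (key (pst pi n) (ptr pi n) (pst pi (S n))); auto; apply Hreq; auto; lia.
Qed.
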